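(* Let $s,u\geq 0$ and $m,v,w>0$. Let $\mathfrak{n}$ be the five-dimensional real Lie algebra with basis $\{E_1,\dots,E_5\}$ whose only non-vanishing brackets (up to antisymmetry) are $$[E_1,E_2]=mE_4+sE_5,\qquad [E_1,E_3]=uE_5,\qquad [E_1,E_4]=vE_5,\qquad [E_2,E_3]=wE_5.$$ Equip the corresponding simply connected nilpotent Lie group with the left-invariant Riemannian metric for which $\{E_1,\dots,E_5\}$ is orthonormal. Then this metric is an algebraic Ricci soliton if and only if $$s=u=0,\qquad v=m,\qquad w=\tfrac{\sqrt2}{2}m.$$ In that case $$c=-\tfrac74m^2,\qquad D=\mathrm{diag}\big(\tfrac34m^2,m^2,\tfrac32m^2,\tfrac74m^2,\tfrac52m^2\big),$$ where $D$ is written as a matrix with respect to the basis $\{E_1,\dots,E_5\}$.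
   Context: Let $G$ be a Lie group with Lie algebra $\mathfrak{g}$ and let $g$ be a left-invariant Riemannian metric on $G$. Let $\mathrm{Ric}$ denote the $(1,1)$ Ricci tensor of $g$, viewed as a linear endomorphism of $\mathfrak{g}$. The metric $g$ is an algebraic Ricci soliton if there are a real number $c$ and a derivation $D$ of $\mathfrak{g}$ such that $\mathrm{Ric}=c\,\mathrm{Id}+D$. The notation $\mathrm{diag}(a_1,\dots,a_5)$ denotes the diagonal matrix with these entries. *)

(* Defs.v *)
(* Left-invariant metrics on Lie groups are encoded at the
   Lie algebra level: g = R^n (column vectors) with an orthonormal basis
   e_0..e_(n-1), the metric being the standard inner product, and the Lie
   bracket given by structure constants C i j = [e_i, e_j]. *)
From HB Require Import structures.
From mathcomp Require Import all_boot all_order all_algebra.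
Set Implicit Arguments. Unset Strict Implicit. Unset Printing Implicit Defensive.
Import Order.TTheory GRing.Theory Num.Theory.
Local Open Scope ring_scope.

Section LieMetric.
Variable R : realFieldType.
Variable n : nat.

Definition ebase (k : 'I_n) : 'cV[R]_n := delta_mx k 0.

Definition ip (x y : 'cV[R]_n) : R := (x^T *m y) 0 0.

Definition lbr (C : 'I_n -> 'I_n -> 'cV[R]_n) (x y : 'cV[R]_n) : 'cV[R]_n :=
  \sum_(i < n) \sum_(j < n) (x i 0 * y j 0) *: C i j.

(* Levi-Civita connection of the left-invariant metric (Koszul formula):
   2 <nabla_x y, z> = <[x,y],z> - <[y,z],x> + <[z,x],y> *)
Definition lc_nabla C (x y : 'cV[R]_n) : 'cV[R]_n :=
  \col_(k < n) ((ip (lbr C x y) (ebase k) - ip (lbr C y (ebase k)) x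
                 + ip (lbr C (ebase k) x) y) / 2).

Definition curv C (x y z : 'cV[R]_n) : 'cV[R]_n :=
  lc_nabla C x (lc_nabla C y z) - lc_nabla C y (lc_nabla C x z)
  - lc_nabla C (lbr C x y) z.

Definition ric02 C (y z : 'cV[R]_n) : R :=
  \sum_(k < n) ip (curv C (ebase k) y z) (ebase k).

(* (1,1) Ricci tensor as an endomorphism (matrix acting on column vectors)
   w.r.t. the orthonormal basis *)
Definition ricci C : 'M[R]_n := \matrix_(i, j) ric02 C (ebase i) (ebase j).

Definition is_derivation C (D : 'M[R]_n) : Prop :=
  forall x y : 'cV[R]_n, D *m lbr C x y = lbr C (D *m x) y + lbr C x (D *m y).

Definition alg_ricci_soliton_with C (c : R) (D : 'M[R]_n) : Prop :=
  is_derivation C D /\ ricci C = c%:M + D.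

Definition is_alg_ricci_soliton C : Prop :=
  exists c D, alg_ricci_soliton_with C c D.

End LieMetric.

(* The five-dimensional nilpotent Lie algebra of the statement; E_1..E_5 are
   ebase 0 .. ebase 4. *)
Definition nC (R : realFieldType) (m s u v w : R) (i j : 'I_5) : 'cV[R]_5 :=
  let E4 := ebase R (@inord 4 3) in
  let E5 := ebase R (@inord 4 4) in
  match nat_of_ord i, nat_of_ord j with
  | 0, 1 => m *: E4 + s *: E5
  | 1, 0 => - (m *: E4 + s *: E5)
  | 0, 2 => u *: E5
  | 2, 0 => - (u *: E5)
  | 0, 3 => v *: E5
  | 3, 0 => - (v *: E5)
  | 1, 2 => w *: E5
  | 2, 1 => - (w *: E5)
  | _, _ => 0
  end.

(* Main.v *)
Require Import Defs.
From HB Require Import structures.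
From mathcomp Require Import all_boot all_order all_algebra.
From mathcomp Require Import ring lra.
Import Order.TTheory GRing.Theory Num.Theory.
Local Open Scope ring_scope.
Set Implicit Arguments. Unset Strict Implicit. Unset Printing Implicit Defensive.
Section Gen.
Variable R : realFieldType.
Variable n : nat.
Variable C : 'I_n -> 'I_n -> 'cV[R]_n.
Local Notation c p q r := ((C p q) r 0).

Lemma subE p q (A B : 'M[R]_(p,q)) i j : (A - B) i j = A i j - B i j.
Proof. by rewrite !mxE. Qed.

Lemma ebaseE (k i : 'I_n) : ebase R k i 0 = (i == k)%:R.
Proof. by rewrite /ebase mxE eqxx andbT. Qed.

Lemma ipE (x y : 'cV[R]_n) : ip x y = \sum_k x k 0 * y k 0.
Proof. by rewrite /ip mxE; apply: eq_bigr => k _; rewrite mxE. Qed.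

Lemma lbrE (x y : 'cV[R]_n) k : lbr C x y k 0 = \sum_i \sum_j x i 0 * y j 0 * c i j k.
Proof.
rewrite /lbr summxE; apply: eq_bigr => i _; rewrite summxE; apply: eq_bigr => j _.
by rewrite mxE.
Qed.

Lemma sum_delta (F : 'I_n -> R) k : \sum_i F i * (i == k)%:R = F k.
Proof.
rewrite (bigD1 k) //= eqxx mulr1 big1 ?addr0 // => j /negbTE ->.
by rewrite mulr0.
Qed.

Lemma sum_ip_e (x : 'cV[R]_n) k : \sum_l x l 0 * ebase R k l 0 = x k 0.
Proof. by under eq_bigr do rewrite ebaseE; rewrite sum_delta. Qed.

Lemma lbr_x_e (x : 'cV[R]_n) q k : lbr C x (ebase R q) k 0 = \sum_p x p 0 * c p q k.
Proof.
rewrite lbrE; apply: eq_bigr => p _.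
under eq_bigr do rewrite ebaseE -mulrA [_%:R * _]mulrC mulrA.
by rewrite sum_delta.
Qed.

Lemma lbr_e_x (x : 'cV[R]_n) p k : lbr C (ebase R p) x k 0 = \sum_q x q 0 * c p q k.
Proof.
rewrite lbrE exchange_big /=; apply: eq_bigr => q _.
under eq_bigr do rewrite ebaseE [_%:R * _]mulrC -mulrA [_%:R * _]mulrC mulrA.
by rewrite sum_delta.
Qed.

Lemma lbr_e_e p q k : lbr C (ebase R p) (ebase R q) k 0 = c p q k.
Proof.
rewrite lbr_e_x; under eq_bigr do rewrite ebaseE mulrC.
by rewrite sum_delta.
Qed.

Definition G p q r := (c p q r - c q r p + c r p q) / 2.

Lemma nablaE (x y : 'cV[R]_n) k : lc_nabla C x y k 0 = \sum_i \sum_j x i 0 * y j 0 * G i j k.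
Proof.
rewrite /lc_nabla mxE !ipE sum_ip_e.
have e2 : \sum_l lbr C y (ebase R k) l 0 * x l 0 = \sum_i \sum_j x i 0 * y j 0 * c j k i.
  under eq_bigr do rewrite lbr_x_e big_distrl.
  rewrite [RHS]exchange_big /= exchange_big /=; apply: eq_bigr => j _.
  by apply: eq_bigr => i _; ring.
have e3 : \sum_l lbr C (ebase R k) x l 0 * y l 0 = \sum_i \sum_j x i 0 * y j 0 * c k i j.
  under eq_bigr do rewrite lbr_e_x big_distrl.
  rewrite exchange_big /=; apply: eq_bigr => i _.
  by apply: eq_bigr => j _; ring.
rewrite e2 e3 lbrE /G -sumrB -big_split /= mulr_suml; apply: eq_bigr => i _.
by rewrite -sumrB -big_split /= mulr_suml; apply: eq_bigr => j _; ring.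
Qed.

Lemma nabla_ey p (y : 'cV[R]_n) k : lc_nabla C (ebase R p) y k 0 = \sum_j y j 0 * G p j k.
Proof.
rewrite nablaE exchange_big /=; apply: eq_bigr => j _.
under eq_bigr do rewrite ebaseE [_%:R * _]mulrC -!mulrA [_%:R * _]mulrC.
by rewrite -big_distrr /= sum_delta.
Qed.

Lemma nabla_ee p q k : lc_nabla C (ebase R p) (ebase R q) k 0 = G p q k.
Proof.
rewrite nabla_ey; under eq_bigr do rewrite ebaseE mulrC.
by rewrite sum_delta.
Qed.

Lemma nabla_xe (x : 'cV[R]_n) q k : lc_nabla C x (ebase R q) k 0 = \sum_i x i 0 * G i q k.
Proof.
rewrite nablaE; apply: eq_bigr => i _.
under eq_bigr do rewrite ebaseE -mulrA [_%:R * _]mulrC mulrA.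
by rewrite sum_delta.
Qed.

Lemma ricciE a b : ricci C a b =
  \sum_k \sum_j (G a b j * G k j k - G k b j * G a j k - c k a j * G j b k).
Proof.
rewrite /ricci mxE /ric02; apply: eq_bigr => k _.
rewrite ipE sum_ip_e /curv !subE nabla_ey nabla_ey nabla_xe.
under eq_bigr do rewrite nabla_ee.
under [X in _ - X - _]eq_bigr do rewrite nabla_ee.
under [X in _ - _ - X]eq_bigr do rewrite lbr_e_e.
by rewrite -!sumrB.
Qed.

Lemma mulmx_e (D : 'M[R]_n) q p : (D *m ebase R q) p 0 = D p q.
Proof. by rewrite mxE; under eq_bigr do rewrite ebaseE; rewrite sum_delta. Qed.

Lemma der_coord (D : 'M[R]_n) : is_derivation C D -> forall i j k,
  \sum_r D k r * c i j r = \sum_p D p i * c p j k + \sum_p D p j * c i p k.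
Proof.
move=> H i j k; have := congr1 (fun M : 'cV[R]_n => M k 0) (H (ebase R i) (ebase R j)).
rewrite /= mxE !mxE lbr_x_e lbr_e_x => E.
transitivity (\sum_r D k r * lbr C (ebase R i) (ebase R j) r 0).
  by apply: eq_bigr => r _; rewrite lbr_e_e.
by rewrite E; congr (_ + _); apply: eq_bigr => p _; rewrite mulmx_e.
Qed.

Lemma coord_der (D : 'M[R]_n) : (forall i j k,
  \sum_r D k r * c i j r = \sum_p D p i * c p j k + \sum_p D p j * c i p k) ->
  is_derivation C D.
Proof.
move=> H x y; apply/matrixP => k l; rewrite [l]ord1.
rewrite !mxE !lbrE.
have e1 : \sum_r D k r * lbr C x y r 0 =
   \sum_p \sum_q x p 0 * y q 0 * (\sum_r D k r * c p q r).
  under eq_bigr do rewrite lbrE big_distrr.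
  rewrite exchange_big /=; apply: eq_bigr => p _.
  under eq_bigr do rewrite big_distrr.
  rewrite exchange_big /=; apply: eq_bigr => q _.
  rewrite big_distrr /=; apply: eq_bigr => r _; ring.
have e2 : \sum_p \sum_q (D *m x) p 0 * y q 0 * c p q k =
   \sum_p \sum_q x p 0 * y q 0 * (\sum_r D r p * c r q k).
  under eq_bigr => p _ do under eq_bigr => q _ do rewrite mxE !big_distrl.
  under eq_bigr => p _ do rewrite exchange_big.
  rewrite exchange_big /=; apply: eq_bigr => r _.
  rewrite exchange_big /=; apply: eq_bigr => q _.
  rewrite big_distrr /=; apply: eq_bigr => p _; ring.
have e3 : \sum_p \sum_q x p 0 * (D *m y) q 0 * c p q k =
   \sum_p \sum_q x p 0 * y q 0 * (\sum_r D r q * c p r k).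
  apply: eq_bigr => p _.
  under eq_bigr => q _ do rewrite mxE big_distrr !big_distrl.
  rewrite exchange_big /=; apply: eq_bigr => r _.
  rewrite big_distrr /=; apply: eq_bigr => q _; ring.
rewrite e1 e2 e3 -big_split /=; apply: eq_bigr => p _.
rewrite -big_split /=; apply: eq_bigr => q _.
by rewrite H; ring.
Qed.
End Gen.

Section Conc.
Variable R : realFieldType.
Variables m s u v w : R.

Definition cf (i j k : nat) : R :=
  match i, j, k with
  | 0, 1, 3 => m | 0, 1, 4 => s | 1, 0, 3 => - m | 1, 0, 4 => - s
  | 0, 2, 4 => u | 2, 0, 4 => - u | 0, 3, 4 => v | 3, 0, 4 => - v
  | 1, 2, 4 => w | 2, 1, 4 => - w | _, _, _ => 0 end.

Lemma nC_coord (i j k : 'I_5) : (nC m s u v w i j) k 0 = cf i j k.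
Proof.
case: i => [[|[|[|[|[|i]]]]] Hi] //; case: j => [[|[|[|[|[|j]]]]] Hj] //;
case: k => [[|[|[|[|[|k]]]]] Hk] //;
rewrite /nC /cf /= ?mxE ?ebaseE -?val_eqE /= ?inordK //=; ring.
Qed.

Definition RicT (a b : nat) : R :=
  match a, b with
  | 0, 0 => - (v^+2 + u^+2 + s^+2 + m^+2) / 2
  | 0, 1 | 1, 0 => - (u * w) / 2
  | 0, 2 | 2, 0 => s * w / 2
  | 1, 1 => - (w^+2 + s^+2 + m^+2) / 2
  | 1, 2 | 2, 1 => - (s * u) / 2
  | 1, 3 | 3, 1 => - (s * v) / 2
  | 2, 2 => - (w^+2 + u^+2) / 2
  | 2, 3 | 3, 2 => - (u * v) / 2
  | 3, 3 => (m^+2 - v^+2) / 2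
  | 3, 4 | 4, 3 => m * s / 2
  | 4, 4 => (w^+2 + v^+2 + u^+2 + s^+2) / 2
  | _, _ => 0 end.

Lemma ricci_coord (a b : 'I_5) : ricci (nC m s u v w) a b = RicT a b.
Proof.
rewrite ricciE /G.
under eq_bigr => k _ do under eq_bigr => j _ do rewrite !nC_coord.
rewrite !big_ord_recl !big_ord0.
case: a => [[|[|[|[|[|a]]]]] Ha] //; case: b => [[|[|[|[|[|b]]]]] Hb] //;
rewrite /= /RicT; by field.
Qed.

Definition Df (c0 : R) (p q : nat) : R := RicT p q - (if p == q then c0 else 0).

Definition EQ c0 (i j k : nat) : Prop :=
  \sum_(r < 5) Df c0 k r * cf i j r =
  \sum_(p < 5) Df c0 p i * cf p j k + \sum_(p < 5) Df c0 p j * cf i p k.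

Lemma D_coord c0 (p q : 'I_5) :
  (ricci (nC m s u v w) - c0%:M) p q = Df c0 p q.
Proof.
rewrite subE ricci_coord mxE /Df -val_eqE.
by case: (val p == val q); rewrite ?mulr1n ?mulr0n.
Qed.

Lemma der_iff c0 : is_derivation (nC m s u v w) (ricci (nC m s u v w) - c0%:M)
  <-> forall i j k : 'I_5, EQ c0 i j k.
Proof.
set D := ricci _ - _.
have S1 i j k : \sum_r D k r * (nC m s u v w i j) r 0 = \sum_(r < 5) Df c0 k r * cf i j r.
  by apply: eq_bigr => r _; rewrite D_coord nC_coord.
have S2 i j k : \sum_p D p i * (nC m s u v w p j) k 0 = \sum_(p < 5) Df c0 p i * cf p j k.
  by apply: eq_bigr => r _; rewrite D_coord nC_coord.
have S3 i j k : \sum_p D p j * (nC m s u v w i p) k 0 = \sum_(p < 5) Df c0 p j * cf i p k.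
  by apply: eq_bigr => r _; rewrite D_coord nC_coord.
split => H.
  move=> i j k; rewrite /EQ -S1 -S2 -S3; exact: der_coord.
apply: coord_der => i j k; rewrite S1 S2 S3; exact: H.
Qed.
End Conc.

Unset Implicit Arguments.

Lemma fwd (R : rcfType) (m s u v w c0 : R) :
  0 < m -> 0 < v -> 0 < w ->
  is_derivation (nC m s u v w) (ricci (nC m s u v w) - c0%:M) ->
  [/\ s = 0, u = 0, v = m & w = Num.sqrt 2 / 2 * m] /\ c0 = - (7 / 4) * m ^+ 2.
Proof.
move=> m0 v0 w0 /der_iff H.
have := H (@Ordinal 5 0 isT) (@Ordinal 5 1 isT) (@Ordinal 5 1 isT).
rewrite /EQ !big_ord_recl !big_ord0 /= /Df /RicT /cf /= => E011.
have := H (@Ordinal 5 0 isT) (@Ordinal 5 1 isT) (@Ordinal 5 2 isT).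
rewrite /EQ !big_ord_recl !big_ord0 /= /Df /RicT /cf /= => E012.
have := H (@Ordinal 5 0 isT) (@Ordinal 5 1 isT) (@Ordinal 5 3 isT).
rewrite /EQ !big_ord_recl !big_ord0 /= /Df /RicT /cf /= => E013.
have := H (@Ordinal 5 0 isT) (@Ordinal 5 3 isT) (@Ordinal 5 4 isT).
rewrite /EQ !big_ord_recl !big_ord0 /= /Df /RicT /cf /= => E034.
have := H (@Ordinal 5 1 isT) (@Ordinal 5 2 isT) (@Ordinal 5 4 isT).
rewrite /EQ !big_ord_recl !big_ord0 /= /Df /RicT /cf /= => E124.
have : m * (u * v) == 0 by apply/eqP; lra.
rewrite !mulf_eq0 (gt_eqF m0) (gt_eqF v0) /= orbF => /eqP hu.
have : m * (s * v) == 0 by apply/eqP; lra.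
rewrite !mulf_eq0 (gt_eqF m0) (gt_eqF v0) /= orbF => /eqP hs.
subst s u.
have : m * (c0 + w^+2/2 + 3/2 * m^+2) == 0 by apply/eqP; lra.
rewrite mulf_eq0 (gt_eqF m0) /= => /eqP hc.
have : v * (c0 + w^+2/2 + 3/2 * v^+2) == 0 by apply/eqP; lra.
rewrite mulf_eq0 (gt_eqF v0) /= => /eqP hc2.
have : w * (c0 + 3/2 * w^+2 + v^+2/2 + m^+2/2) == 0 by apply/eqP; lra.
rewrite mulf_eq0 (gt_eqF w0) /= => /eqP hc3.
have hv2 : v ^+ 2 = m ^+ 2 by lra.
have hv : v = m.
  by apply/eqP; rewrite -(@eqrXn2 _ 2%N _ _ isT (ltW v0) (ltW m0)) hv2.
subst v.
have hw2 : w ^+ 2 = m ^+ 2 / 2 by lra.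
have q2 : (Num.sqrt 2 / 2 * m) ^+ 2 = m ^+ 2 / 2.
  rewrite !exprMn sqr_sqrtr ?ler0n //; by field.
have hc0 : c0 = - (7 / 4) * m ^+ 2 by lra.
split => //; split => //.
have p0 : 0 <= Num.sqrt 2 / 2 * m.
  by rewrite mulr_ge0 ?divr_ge0 ?sqrtr_ge0 ?ler0n ?ltW.
by apply/eqP; rewrite -(@eqrXn2 _ 2%N _ _ isT (ltW w0) p0) hw2 q2.
Qed.

Lemma bwd (R : rcfType) (m w : R) : 0 < m -> w = Num.sqrt 2 / 2 * m ->
  is_derivation (nC m 0 0 m w) (ricci (nC m 0 0 m w) - (- (7 / 4) * m ^+ 2)%:M).
Proof.
move=> m0 hw.
have hw2 : w ^+ 2 = m ^+ 2 / 2.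
  by rewrite hw !exprMn sqr_sqrtr ?ler0n //; field.
apply/der_iff => -[[|[|[|[|[|i]]]]] Hi] //; move=> -[[|[|[|[|[|j]]]]] Hj] //;
move=> -[[|[|[|[|[|k]]]]] Hk] //;
rewrite /EQ !big_ord_recl !big_ord0 /= /Df /RicT /cf /= ?hw2; by field.
Qed.

Theorem mainTheorem8 (R : rcfType) (m s u v w : R) :
  0 <= s -> 0 <= u -> 0 < m -> 0 < v -> 0 < w ->
  (is_alg_ricci_soliton (nC m s u v w)
     <-> [/\ s = 0, u = 0, v = m & w = Num.sqrt 2 / 2 * m])
  /\
  ([/\ s = 0, u = 0, v = m & w = Num.sqrt 2 / 2 * m] ->
   forall (c : R) (D : 'M[R]_5),
     alg_ricci_soliton_with (nC m s u v w) c D ->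
     c = - (7 / 4) * m ^+ 2 /\
     D = diag_mx (\row_(i < 5)
           [:: 3 / 4 * m ^+ 2; m ^+ 2; 3 / 2 * m ^+ 2; 7 / 4 * m ^+ 2;
               5 / 2 * m ^+ 2]`_i)).
Proof.
move=> s0 u0 m0 v0 w0.
have key c D : alg_ricci_soliton_with (nC m s u v w) c D ->
    D = ricci (nC m s u v w) - c%:M /\
    ([/\ s = 0, u = 0, v = m & w = Num.sqrt 2 / 2 * m] /\ c = - (7 / 4) * m ^+ 2).
  move=> [Hd Hr]; have hD : D = ricci (nC m s u v w) - c%:M by rewrite Hr addrC addKr.
  by split => //; apply: fwd => //; rewrite -hD.
split.
  split; first by move=> [c [D /key [_ []]]].
  case=> hs hu hv hw; subst s u v.
  exists (- (7 / 4) * m ^+ 2), (ricci (nC m 0 0 m w) - (- (7 / 4) * m ^+ 2)%:M).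
  by split; [exact: bwd | rewrite addrC subrK].
move=> _ c D /key [hD [[hs hu hv hw] hc]]; split => //.
subst s u v.
have hw2 : w ^+ 2 = m ^+ 2 / 2.
  by rewrite hw !exprMn sqr_sqrtr ?ler0n //; field.
rewrite hD hc; apply/matrixP => p q; rewrite D_coord !mxE.
move: p q => [[|[|[|[|[|p]]]]] Hp] //; move=> [[|[|[|[|[|q]]]]] Hq] //;
rewrite /Df /RicT /= ?hw2; by field.
Qed.
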